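(* The doctrine $\mathbb P\Gamma:\mathbf{PAsm}^{op}\to\mathbf{InfSL}$ satisfies the Type-theoretic Church's Thesis $(\mathbf{TCT})$.
   Context: Write $\varphi_e$ for the $e$-th partial recursive function and $\langle n,m\rangle$ for a recursive pairing. $\mathbf{PAsm}$ is the category of partitioned assemblies: objects are pairs $(P,T)$ with $P$ a set and $T:P\to\mathbb N$ a function; arrows $f:(P,T)\to(P',T')$ are functions $f:P\to P'$ such that some $t\in\mathbb N$ tracks $f$, i.e. for all $x\in P$, $\varphi_t(T(x))$ is defined and equals $T'(f(x))$. Products are $(P\times M,\,(x,y)\mapsto\langle T(x),S(y)\rangle)$; $\mathbf N=(\mathbb N,\mathrm{id})$ with zero and successor is a parameterized natural number object; a weak exponential of $\mathbf N$ with $\mathbf N$ is $(W,V)$, $W=\{(g,t)\in\mathbb N^{\mathbb N}\times\mathbb N\mid t\text{ tracks }g\}$, $V(g,t)=t$, with weak evaluation $ev((g,t),x)=g(x)$. $\mathbb P\Gamma$ sends $(P,T)$ to the powerset of $P$ and acts on arrows by inverse image; it is a (boolean) hyperdoctrine whose equality predicates are diagonals and whose quantifiers are the set-theoretic ones. Let $T:\mathbf N\times\mathbf N\times\mathbf N\to\mathbf N$ and $U:\mathbf N\to\mathbf N$ denote arrows representing Kleene's primitive recursive T-predicate (as a 0/1-valued function) and result-extraction function. For a weak evaluation $ev:W\times\mathbf N\to\mathbf N$ let $\overline{ev}(e,x,y,f)$ be the formula $T(e,x,y)=_{\mathbf N}s(0)\wedge U(y)=_{\mathbf N}ev(f,x)$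 and $\mathbf{Rec}(f)$ be $\exists e:\mathbf N.\forall x:\mathbf N.\exists y:\mathbf N.\overline{ev}(e,x,y,f)$. A doctrine with a parameterized natural number object satisfies $(\mathbf{TCT})$ if for some weak exponential $W$ of $\mathbf N$ with $\mathbf N$ and weak evaluation $ev$ one has $\vdash\forall f:W.\mathbf{Rec}(f)$ (i.e. the top element of the fibre over the terminal object lies below this sentence). *)

(* Defs.v *)
From Stdlib Require Import Arith Cantor.

Definition pair (n m : nat) : nat := Cantor.to_nat (n, m).
Definition unpair (n : nat) : nat * nat := Cantor.of_nat n.

(* Partial recursive functions (unary, over the Cantor pairing):          *)
Inductive code : Type :=
| CZero
| CSucc
| CId
| CFst
| CSnd
| CPair (f g : code)
| CComp (f g : code)         (* x |-> f (g x) *)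
| CRec (f g : code)          (* <u,0> |-> f u ; <u,n+1> |-> g <u,<n, r(u,n)>> *)
| CMu (f : code).            (* x |-> least i with f <x,i> = 0 (all earlier defined) *)

(* Goedel numbering: decoding numbers into codes (every code is hit). *)
Fixpoint decode_fuel (fuel n : nat) : code :=
  match fuel with
  | 0 => CZero
  | S fu =>
    let (t, r) := unpair n in
    match t with
    | 0 => CZero
    | 1 => CSucc
    | 2 => CId
    | 3 => CFst
    | 4 => CSnd
    | 5 => let (a, b) := unpair r in CPair (decode_fuel fu a) (decode_fuel fu b)
    | 6 => let (a, b) := unpair r in CComp (decode_fuel fu a) (decode_fuel fu b)
    | 7 => let (a, b) := unpair r in CRec (decode_fuel fu a) (decode_fuel fu b)
    | 8 => CMu (decode_fuel fu r)
    | _ => CZero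
    end
  end.

Definition decode (n : nat) : code := decode_fuel (S n) n.

Fixpoint evalk (k : nat) (c : code) (x : nat) : option nat :=
  match k with
  | 0 => None
  | S k' =>
    match c with
    | CZero => Some 0
    | CSucc => Some (S x)
    | CId => Some x
    | CFst => Some (fst (unpair x))
    | CSnd => Some (snd (unpair x))
    | CPair f g =>
        match evalk k' f x with
        | Some a => match evalk k' g x with
                    | Some b => Some (pair a b)
                    | None => None end
        | None => None end
    | CComp f g =>
        match evalk k' g x with
        | Some b => evalk k' f b
        | None => None end
    | CRec f g =>
        let (u, n) := unpair x in
        (fix go (m : nat) : option nat :=
           match m with
           | 0 => evalk k' f u
           | S m' => match go m' with
                     | Some r => evalk k' g (pair u (pair m' r))
                     | None => None end
           end) n
    | CMu f =>
        (fix srch (j i : nat) : option nat :=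
           match j with
           | 0 => None
           | S j' => match evalk k' f (pair x i) with
                     | Some 0 => Some i
                     | Some _ => srch j' (S i)
                     | None => None end
           end) k' 0
    end
  end.

Definition phi (e x y : nat) : Prop := exists k, evalk k (decode e) x = Some y.

(* y = <k, r> codes a halting computation of e on x, within k steps,      *)
(* with result r.                                                          *)
Definition kleeneT (e x y : nat) : nat :=
  let (k, r) := unpair y in
  match evalk k (decode e) x with
  | Some r' => if Nat.eqb r' r then 1 else 0
  | None => 0
  end.
Definition kleeneU (y : nat) : nat := snd (unpair y).

Record PAsm : Type := mkPAsm { carrier : Type; real : carrier -> nat }.

Definition tracks (X Y : PAsm) (f : carrier X -> carrier Y) (t : nat) : Prop :=
  forall x : carrier X, phi t (real X x) (real Y (f x)).

Definition is_arrow (X Y : PAsm) (f : carrier X -> carrier Y) : Prop :=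
  exists t, tracks X Y f t.

Definition prodA (X Y : PAsm) : PAsm :=
  mkPAsm (carrier X * carrier Y)%type (fun p => pair (real X (fst p)) (real Y (snd p))).

Definition NN : PAsm := mkPAsm nat (fun n => n).

Definition is_weak_exp_NN (W : PAsm) (ev : carrier (prodA W NN) -> carrier NN) : Prop :=
  is_arrow (prodA W NN) NN ev /\
  forall (X : PAsm) (h : carrier (prodA X NN) -> carrier NN),
    is_arrow (prodA X NN) NN h ->
    exists k : carrier X -> carrier W,
      is_arrow X W k /\ forall (a : carrier X) (x : nat), ev (k a, x) = h (a, x).

Definition PGamma (X : PAsm) : Type := carrier X -> Prop.

(* Interpretation of Rec(f) in P Gamma (set-theoretic quantifiers,        *)
(* equality = diagonal).                                                   *)
Definition Rec (W : PAsm) (ev : carrier (prodA W NN) -> carrier NN) : PGamma W :=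
  fun f => exists e : nat, forall x : nat, exists y : nat,
             kleeneT e x y = S 0 /\ kleeneU y = ev (f, x).

(* (TCT) for P Gamma: for some weak exponential, top <= forall f:W. Rec(f)  *)
(* in the fibre over the terminal object (= powerset of a singleton).       *)
Definition TCT_PGamma : Prop :=
  exists (W : PAsm) (ev : carrier (prodA W NN) -> carrier NN),
    is_weak_exp_NN W ev /\ forall f : carrier W, Rec W ev f.

(* Main.v *)
Require Import Defs.
From Stdlib Require Import Arith Cantor Lia.

Lemma upp a b : unpair (pair a b) = (a, b).
Proof. apply Cantor.cancel_of_to. Qed.

Definition PU : { p : (nat -> nat -> nat) * (nat -> nat * nat) | fst p = pair /\ snd p = unpair }.
Proof. exists (pair, unpair). split; reflexivity. Qed.
Definition pr := fst (proj1_sig PU).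
Definition upr := snd (proj1_sig PU).
Lemma pr_fun : pr = pair.
Proof. unfold pr. destruct PU as [p [H1 H2]]. exact H1. Qed.
Lemma upr_fun : upr = unpair.
Proof. unfold upr. destruct PU as [p [H1 H2]]. exact H2. Qed.
Lemma uprp a b : upr (pr a b) = (a, b).
Proof. rewrite pr_fun, upr_fun. apply upp. Qed.

Fixpoint goF (Ef Eg : nat -> option nat) (u m : nat) : option nat :=
  match m with
  | 0 => Ef u
  | S m' => match goF Ef Eg u m' with
            | Some r => Eg (pair u (pair m' r))
            | None => None end
  end.

Fixpoint srchF (E : nat -> option nat) (x j i : nat) : option nat :=
  match j with
  | 0 => None
  | S j' => match E (pair x i) with
            | Some 0 => Some i
            | Some _ => srchF E x j' (S i)
            | None => None end
  end.

Lemma evalk_rec k f g x :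
  evalk (S k) (CRec f g) x = goF (evalk k f) (evalk k g) (fst (unpair x)) (snd (unpair x)).
Proof.
  simpl. destruct (unpair x) as [u n]. simpl. induction n; simpl; auto.
  rewrite IHn. reflexivity.
Qed.

Lemma evalk_mu k f x : evalk (S k) (CMu f) x = srchF (evalk k f) x k 0.
Proof.
  simpl. set (E := evalk k f). clearbody E. generalize 0. induction k; intro i; simpl; auto.
  destruct (E (pair x i)) as [[|]|]; auto.
Qed.

Lemma goF_mono Ef Eg Ef' Eg' u :
  (forall z v, Ef z = Some v -> Ef' z = Some v) ->
  (forall z v, Eg z = Some v -> Eg' z = Some v) ->
  forall m r, goF Ef Eg u m = Some r -> goF Ef' Eg' u m = Some r.
Proof.
  intros Hf Hg. induction m; simpl; intros r H; auto.
  destruct (goF Ef Eg u m) eqn:E; [|discriminate].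
  rewrite (IHm _ eq_refl). auto.
Qed.

Lemma srchF_mono E E' x :
  (forall z v, E z = Some v -> E' z = Some v) ->
  forall j j' i y, j <= j' -> srchF E x j i = Some y -> srchF E' x j' i = Some y.
Proof.
  intros HE. induction j; simpl; intros j' i y Hj H; [discriminate|].
  destruct j' as [|j']; [lia|]. simpl.
  destruct (E (pair x i)) as [[|v]|] eqn:Ez; [| |discriminate].
  - rewrite (HE _ _ Ez). auto.
  - rewrite (HE _ _ Ez). apply IHj; auto; lia.
Qed.

Lemma evalk_pair k f g x : evalk (S k) (CPair f g) x =
  match evalk k f x with Some a => match evalk k g x with Some b => Some (pair a b) | None => None end | None => None end.
Proof. reflexivity. Qed.
Lemma evalk_comp k f g x : evalk (S k) (CComp f g) x =
  match evalk k g x with Some b => evalk k f b | None => None end.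
Proof. reflexivity. Qed.

Lemma evalk_S : forall k c x y, evalk k c x = Some y -> evalk (S k) c x = Some y.
Proof.
  induction k; intros c x y H; [discriminate|].
  destruct c.
  1-5: exact H.
  - rewrite evalk_pair in H |- *.
    destruct (evalk k c1 x) eqn:E1; [|discriminate].
    destruct (evalk k c2 x) eqn:E2; [|discriminate].
    rewrite (IHk _ _ _ E1), (IHk _ _ _ E2). exact H.
  - rewrite evalk_comp in H |- *.
    destruct (evalk k c2 x) eqn:E2; [|discriminate].
    rewrite (IHk _ _ _ E2). apply IHk. exact H.
  - rewrite evalk_rec in H |- *. eapply goF_mono; [apply IHk|apply IHk|exact H].
  - rewrite evalk_mu in H |- *. eapply srchF_mono; [apply IHk| |exact H]. lia.
Qed.

Lemma evalk_mono k k' c x y : k <= k' -> evalk k c x = Some y -> evalk k' c x = Some y.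
Proof. induction 1; auto. intro. apply evalk_S; auto. Qed.

Lemma evalk_det k k' c x a b : evalk k c x = Some a -> evalk k' c x = Some b -> a = b.
Proof.
  intros H1 H2.
  assert (H1' := evalk_mono k (max k k') c x a ltac:(lia) H1).
  assert (H2' := evalk_mono k' (max k k') c x b ltac:(lia) H2).
  congruence.
Qed.

Lemma phi_det e x a b : phi e x a -> phi e x b -> a = b.
Proof. intros [k1 H1] [k2 H2]. eapply evalk_det; eauto. Qed.

Fixpoint sem (c : code) (x : nat) : nat :=
  match c with
  | CZero => 0
  | CSucc => S x
  | CId => x
  | CFst => fst (upr x)
  | CSnd => snd (upr x)
  | CPair f g => pr (sem f x) (sem g x)
  | CComp f g => sem f (sem g x)
  | CRec f g => nat_rec (fun _ => nat) (sem f (fst (upr x)))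
                  (fun m r => sem g (pr (fst (upr x)) (pr m r))) (snd (upr x))
  | CMu _ => 0
  end.

Fixpoint mufree (c : code) : Prop :=
  match c with
  | CPair f g | CComp f g | CRec f g => mufree f /\ mufree g
  | CMu _ => False
  | _ => True
  end.

Lemma sem_total c : mufree c -> forall x, exists k, evalk k c x = Some (sem c x).
Proof.
  induction c; intros Hm x; simpl in Hm |- *; rewrite ?pr_fun, ?upr_fun.
  1-5: exists 1; reflexivity.
  - destruct Hm as [H1 H2]. destruct (IHc1 H1 x) as [k1 E1]. destruct (IHc2 H2 x) as [k2 E2].
    exists (S (max k1 k2)). rewrite evalk_pair.
    rewrite (evalk_mono k1 (max k1 k2) _ _ _ ltac:(lia) E1), (evalk_mono k2 (max k1 k2) _ _ _ ltac:(lia) E2). reflexivity.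
  - destruct Hm as [H1 H2]. destruct (IHc2 H2 x) as [k2 E2]. destruct (IHc1 H1 (sem c2 x)) as [k1 E1].
    exists (S (max k1 k2)). rewrite evalk_comp.
    rewrite (evalk_mono k2 (max k1 k2) _ _ _ ltac:(lia) E2), (evalk_mono k1 (max k1 k2) _ _ _ ltac:(lia) E1). reflexivity.
  - destruct Hm as [H1 H2].
    set (u := fst (unpair x)). set (n := snd (unpair x)).
    assert (forall m, exists k, goF (evalk k c1) (evalk k c2) u m =
      Some (nat_rec (fun _ => nat) (sem c1 u) (fun m r => sem c2 (pair u (pair m r))) m)).
    { induction m.
      - destruct (IHc1 H1 u) as [k E]. exists k. exact E.
      - destruct IHm as [k1 E1].
        destruct (IHc2 H2 (pair u (pair m (nat_rec (fun _ => nat) (sem c1 u) (fun m r => sem c2 (pair u (pair m r))) m)))) as [k2 E2].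
        exists (max k1 k2). simpl.
        rewrite (goF_mono (evalk k1 c1) (evalk k1 c2) (evalk (max k1 k2) c1) (evalk (max k1 k2) c2) u
           (fun z v => evalk_mono k1 (max k1 k2) _ z v ltac:(lia)) (fun z v => evalk_mono k1 (max k1 k2) _ z v ltac:(lia)) m _ E1).
        exact (evalk_mono k2 (max k1 k2) _ _ _ ltac:(lia) E2). }
    destruct (H n) as [k E]. exists (S k). rewrite evalk_rec. exact E.
  - destruct Hm.
Qed.

Ltac sm0 := cbn [sem nat_rec nat_rect fst snd Nat.pred] in *.
Ltac sm := repeat progress (sm0; rewrite ?uprp in *).

Fixpoint constc (n : nat) : code :=
  match n with 0 => CZero | S n => CComp CSucc (constc n) end.
Definition ifz (T A B : code) : code := CComp (CRec A (CComp B CFst)) (CPair CId T).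
Definition predc : code := CComp (CRec CZero (CComp CFst CSnd)) (CPair CZero CId).
Definition subc : code := CRec CId (CComp predc (CComp CSnd CSnd)).
Definition ifeq (T1 T2 A B : code) : code :=
  ifz (CComp subc (CPair T1 T2)) (ifz (CComp subc (CPair T2 T1)) A B) B.
Definition consc (A L : code) : code := CComp CSucc (CPair A L).
Fixpoint switch (T : code) (l : list code) (d : code) : code :=
  match l with nil => d | cons A l => ifz T A (switch (CComp predc T) l d) end.

Lemma sem_const n x : sem (constc n) x = n.
Proof. induction n; simpl; auto. Qed.
Lemma mf_const n : mufree (constc n).
Proof. induction n; simpl; auto. Qed.

Lemma sem_ifz T A B x : sem (ifz T A B) x = match sem T x with 0 => sem A x | S _ => sem B x end.
Proof. unfold ifz. cbn [sem]. rewrite uprp. cbn [fst snd]. destruct (sem T x); sm; rewrite ?uprp; reflexivity. Qed.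

Lemma sem_pred x : sem predc x = Nat.pred x.
Proof. unfold predc. cbn [sem]. rewrite uprp. cbn [fst snd]. destruct x; sm; rewrite ?uprp; reflexivity. Qed.

Lemma sem_sub a b : sem subc (pr a b) = a - b.
Proof.
  unfold subc. cbn [sem]. rewrite uprp. cbn [fst snd]. induction b; sm; [lia|].
  rewrite sem_pred. rewrite IHb. lia.
Qed.

Lemma sem_ifeq T1 T2 A B x : sem (ifeq T1 T2 A B) x =
  if Nat.eqb (sem T1 x) (sem T2 x) then sem A x else sem B x.
Proof.
  unfold ifeq. rewrite !sem_ifz. cbn [sem]. rewrite !sem_sub.
  destruct (Nat.eqb (sem T1 x) (sem T2 x)) eqn:E.
  - apply Nat.eqb_eq in E. rewrite E. rewrite Nat.sub_diag. reflexivity.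
  - apply Nat.eqb_neq in E.
    destruct (sem T1 x - sem T2 x) eqn:E1; auto.
    destruct (sem T2 x - sem T1 x) eqn:E2; auto. lia.
Qed.

Lemma sem_cons A L x : sem (consc A L) x = S (pr (sem A x) (sem L x)).
Proof. reflexivity. Qed.

Definition EvalS d x K := pr 0 (pr d (pr x K)).
Definition RetS v K := pr 1 (pr v K).
Definition HaltS v := pr 2 v.
Definition consS a l := S (pr a l).
Definition KPair1 g x := pr 0 (pr g x).
Definition KPair2 a := pr 1 a.
Definition KComp f := pr 2 f.
Definition KRec g u m n := pr 3 (pr g (pr u (pr m n))).
Definition KMu f x i := pr 4 (pr f (pr x i)).

Notation "f 'o' g" := (CComp f g) (at level 40, left associativity).

Definition mkE Dc Xc Kc := CPair (constc 0) (CPair Dc (CPair Xc Kc)).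
Definition mkR Vc Kc := CPair (constc 1) (CPair Vc Kc).
Definition mkH Vc := CPair (constc 2) Vc.

Definition cD := CFst o CSnd.
Definition cX := CFst o (CSnd o CSnd).
Definition cK := CSnd o (CSnd o CSnd).
Definition cCT := CFst o cD.
Definition cCR := CSnd o cD.
Definition cCRf := CFst o cCR.
Definition cCRg := CSnd o cCR.

Definition EvalB : code := switch cCT (
  mkR (constc 0) cK ::
  mkR (CSucc o cX) cK ::
  mkR cX cK ::
  mkR (CFst o cX) cK ::
  mkR (CSnd o cX) cK ::
  mkE cCRf cX (consc (CPair (constc 0) (CPair cCRg cX)) cK) ::
  mkE cCRg cX (consc (CPair (constc 2) cCRf) cK) ::
  mkE cCRf (CFst o cX) (consc (CPair (constc 3) (CPair cCRg (CPair (CFst o cX) (CPair (constc 0) (CSnd o cX))))) cK) ::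
  mkE cCR (CPair cX (constc 0)) (consc (CPair (constc 4) (CPair cCR (CPair cX (constc 0)))) cK) :: nil) CId.

Definition cV := CFst o CSnd.
Definition cL := CSnd o CSnd.
Definition cL' := predc o cL.
Definition cFR := CFst o cL'.
Definition cKT := CSnd o cL'.
Definition cFT := CFst o cFR.
Definition cFA := CSnd o cFR.

Definition RetB : code := ifz cL (mkH cV) (switch cFT (
  mkE (CFst o cFA) (CSnd o cFA) (consc (CPair (constc 1) cV) cKT) ::
  mkR (CPair cFA cV) cKT ::
  mkE cFA cV cKT ::
  ifeq (CFst o (CSnd o (CSnd o cFA))) (CSnd o (CSnd o (CSnd o cFA))) (mkR cV cKT)
    (mkE (CFst o cFA) (CPair (CFst o (CSnd o cFA)) (CPair (CFst o (CSnd o (CSnd o cFA))) cV))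
       (consc (CPair (constc 3) (CPair (CFst o cFA) (CPair (CFst o (CSnd o cFA))
          (CPair (CSucc o (CFst o (CSnd o (CSnd o cFA)))) (CSnd o (CSnd o (CSnd o cFA))))))) cKT)) ::
  ifz cV (mkR (CSnd o (CSnd o cFA)) cKT)
    (mkE (CFst o cFA) (CPair (CFst o (CSnd o cFA)) (CSucc o (CSnd o (CSnd o cFA))))
       (consc (CPair (constc 4) (CPair (CFst o cFA) (CPair (CFst o (CSnd o cFA)) (CSucc o (CSnd o (CSnd o cFA)))))) cKT)) :: nil) CId).

Definition stepc : code := switch CFst (EvalB :: RetB :: nil) CId.
Definition step (s : nat) : nat := sem stepc s.

Ltac st := unfold step, stepc, EvalB, RetB, EvalS, RetS, HaltS, consS, KPair1, KPair2, KComp, KRec, KMu,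
  mkE, mkR, mkH, cD, cX, cK, cCT, cCR, cCRf, cCRg, cV, cL, cL', cFR, cKT, cFT, cFA;
  unfold cD, cCR, cL, cL', cFR; cbn [switch];
  repeat progress (sm; rewrite ?sem_ifz, ?sem_ifeq, ?sem_pred, ?sem_const, ?sem_cons).

Fixpoint encode (c : code) : nat :=
  match c with
  | CZero => pair 0 0
  | CSucc => pair 1 0
  | CId => pair 2 0
  | CFst => pair 3 0
  | CSnd => pair 4 0
  | CPair f g => pair 5 (pair (encode f) (encode g))
  | CComp f g => pair 6 (pair (encode f) (encode g))
  | CRec f g => pair 7 (pair (encode f) (encode g))
  | CMu f => pair 8 (encode f)
  end.


Ltac rup := repeat (match goal with |- context [upr (pr ?a ?b)] => rewrite (uprp a b) end; cbn [fst snd]).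
Ltac rifz := match goal with |- context [sem (ifz ?T ?A ?B) ?x] => rewrite (sem_ifz T A B x) end.
Ltac rl := first [ rifz | match goal with |- context [sem (ifeq ?T1 ?T2 ?A ?B) ?x] => rewrite (sem_ifeq T1 T2 A B x) end
  | match goal with |- context [sem predc ?x] => rewrite (sem_pred x) end
  | match goal with |- context [sem (constc ?n) ?x] => rewrite (sem_const n x) end ].
Ltac st2 := unfold step, stepc, EvalB, RetB, EvalS, RetS, HaltS, consS, KPair1, KPair2, KComp, KRec, KMu,
  mkE, mkR, mkH, cD, cX, cK, cCT, cCR, cCRf, cCRg, cV, cL, cL', cFR, cKT, cFT, cFA;
  repeat unfold consc, cD, cCR, cL, cL', cFR, cFA, cCRf, cCRg, cCT, cFT, cKT, cX, cK, cV; cbn [switch];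
  repeat (sm0; rup; try rl).
Lemma st_zero x K : step (EvalS (encode CZero) x K) = RetS 0 K.
Proof. cbn [encode]. rewrite <- ?pr_fun. Time st2. reflexivity. Qed.
Lemma st_succ x K : step (EvalS (encode CSucc) x K) = RetS (S x) K.
Proof. cbn [encode]. rewrite <- ?pr_fun. Time st2. reflexivity. Qed.
Lemma st_id x K : step (EvalS (encode CId) x K) = RetS x K.
Proof. cbn [encode]. rewrite <- ?pr_fun. Time st2. reflexivity. Qed.
Lemma st_fst x K : step (EvalS (encode CFst) x K) = RetS (fst (upr x)) K.
Proof. cbn [encode]. rewrite <- ?pr_fun. Time st2. reflexivity. Qed.
Lemma st_snd x K : step (EvalS (encode CSnd) x K) = RetS (snd (upr x)) K.
Proof. cbn [encode]. rewrite <- ?pr_fun. Time st2. reflexivity. Qed.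
Lemma st_pair f g x K : step (EvalS (encode (CPair f g)) x K) =
  EvalS (encode f) x (consS (KPair1 (encode g) x) K).
Proof. cbn [encode]. rewrite <- ?pr_fun. Time st2. reflexivity. Qed.
Lemma st_comp f g x K : step (EvalS (encode (CComp f g)) x K) =
  EvalS (encode g) x (consS (KComp (encode f)) K).
Proof. cbn [encode]. rewrite <- ?pr_fun. Time st2. reflexivity. Qed.
Lemma st_rec f g x K : step (EvalS (encode (CRec f g)) x K) =
  EvalS (encode f) (fst (upr x)) (consS (KRec (encode g) (fst (upr x)) 0 (snd (upr x))) K).
Proof. cbn [encode]. rewrite <- ?pr_fun. Time st2. reflexivity. Qed.
Lemma st_mu f x K : step (EvalS (encode (CMu f)) x K) =
  EvalS (encode f) (pr x 0) (consS (KMu (encode f) x 0) K).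
Proof. cbn [encode]. rewrite <- ?pr_fun. Time st2. reflexivity. Qed.
Lemma st_halt v : step (RetS v 0) = HaltS v.
Proof. Time st2. reflexivity. Qed.
Lemma st_haltfix v : step (HaltS v) = HaltS v.
Proof. Time st2. reflexivity. Qed.
Lemma st_kpair1 v g x K : step (RetS v (consS (KPair1 g x) K)) = EvalS g x (consS (KPair2 v) K).
Proof. Time st2. reflexivity. Qed.
Lemma st_kpair2 v a K : step (RetS v (consS (KPair2 a) K)) = RetS (pr a v) K.
Proof. Time st2. reflexivity. Qed.
Lemma st_kcomp v f K : step (RetS v (consS (KComp f) K)) = EvalS f v K.
Proof. Time st2. reflexivity. Qed.
Lemma st_krec v g u m n K : step (RetS v (consS (KRec g u m n) K)) =
  if Nat.eqb m n then RetS v K else EvalS g (pr u (pr m v)) (consS (KRec g u (S m) n) K).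
Proof. Time st2. reflexivity. Qed.
Lemma st_kmu v f x i K : step (RetS v (consS (KMu f x i) K)) =
  match v with 0 => RetS i K | S _ => EvalS f (pr x (S i)) (consS (KMu f x (S i)) K) end.
Proof. Time st2. destruct v; reflexivity. Qed.

Definition Star s s' := exists n, Nat.iter n step s = s'.
Lemma star_refl s : Star s s.
Proof. exists 0. reflexivity. Qed.
Lemma star_trans s1 s2 s3 : Star s1 s2 -> Star s2 s3 -> Star s1 s3.
Proof.
  intros [n1 H1] [n2 H2]. exists (n2 + n1). rewrite Nat.iter_add. congruence.
Qed.
Lemma star_step s s' : Star (step s) s' -> Star s s'.
Proof. intros [n H]. exists (S n). rewrite <- H. rewrite Nat.iter_succ_r. reflexivity. Qed.

Lemma sim_rec Ef Eg ef eg u n K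
  (IHf : forall z v K, Ef z = Some v -> Star (EvalS ef z K) (RetS v K))
  (IHg : forall z v K, Eg z = Some v -> Star (EvalS eg z K) (RetS v K)) :
  forall m r, m <= n -> goF Ef Eg u m = Some r ->
  Star (EvalS ef u (consS (KRec eg u 0 n) K)) (RetS r (consS (KRec eg u m n) K)).
Proof.
  induction m; intros r Hm H; simpl in H.
  - apply IHf. exact H.
  - destruct (goF Ef Eg u m) as [r'|] eqn:E; [|discriminate].
    eapply star_trans. apply (IHm r' ltac:(lia) eq_refl).
    apply star_step. rewrite st_krec.
    destruct (Nat.eqb_spec m n); [lia|].
    apply IHg. rewrite pr_fun. exact H.
Qed.

Lemma sim_mu Ef ef x K
  (IHf : forall z v K, Ef z = Some v -> Star (EvalS ef z K) (RetS v K)) :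
  forall j i y, srchF Ef x j i = Some y ->
  Star (EvalS ef (pr x i) (consS (KMu ef x i) K)) (RetS y K).
Proof.
  induction j; intros i y H; simpl in H; [discriminate|].
  destruct (Ef (pair x i)) as [[|v]|] eqn:E; [| |discriminate].
  - inversion H; subst. eapply star_trans. apply IHf. rewrite pr_fun. exact E.
    apply star_step. rewrite st_kmu. apply star_refl.
  - eapply star_trans. apply IHf. rewrite pr_fun. exact E.
    apply star_step. rewrite st_kmu. apply IHj. exact H.
Qed.

Lemma sim : forall k c x y, evalk k c x = Some y ->
  forall K, Star (EvalS (encode c) x K) (RetS y K).
Proof.
  induction k; intros c x y H K; [discriminate|].
  destruct c.
  - inversion H; subst. apply star_step. rewrite st_zero. apply star_refl.
  - inversion H; subst. apply star_step. rewrite st_succ. apply star_refl.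
  - inversion H; subst. apply star_step. rewrite st_id. apply star_refl.
  - inversion H; subst. apply star_step. rewrite st_fst, upr_fun. apply star_refl.
  - inversion H; subst. apply star_step. rewrite st_snd, upr_fun. apply star_refl.
  - rewrite evalk_pair in H.
    destruct (evalk k c1 x) as [a|] eqn:E1; [|discriminate].
    destruct (evalk k c2 x) as [b|] eqn:E2; [|discriminate].
    inversion H; subst.
    apply star_step. rewrite st_pair.
    eapply star_trans. apply (IHk _ _ _ E1).
    apply star_step. rewrite st_kpair1.
    eapply star_trans. apply (IHk _ _ _ E2).
    apply star_step. rewrite st_kpair2. rewrite pr_fun. apply star_refl.
  - rewrite evalk_comp in H.
    destruct (evalk k c2 x) as [b|] eqn:E2; [|discriminate].
    apply star_step. rewrite st_comp.
    eapply star_trans. apply (IHk _ _ _ E2).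
    apply star_step. rewrite st_kcomp. apply (IHk _ _ _ H).
  - rewrite evalk_rec in H.
    apply star_step. rewrite st_rec. rewrite upr_fun.
    eapply star_trans. apply (sim_rec (evalk k c1) (evalk k c2) (encode c1) (encode c2) _ _ _ (fun z v K E => IHk c1 z v E K) (fun z v K E => IHk c2 z v E K) _ _ (le_n _) H).
    apply star_step. rewrite st_krec. rewrite Nat.eqb_refl. apply star_refl.
  - rewrite evalk_mu in H.
    apply star_step. rewrite st_mu.
    apply (sim_mu (evalk k c) (encode c) x K (fun z v K E => IHk c z v E K) _ _ _ H).
Qed.

Lemma pr_surj s : pr (fst (upr s)) (snd (upr s)) = s.
Proof. rewrite pr_fun, upr_fun. unfold pair, unpair. rewrite <- (Cantor.cancel_to_of s) at 3. destruct (Cantor.of_nat s); reflexivity. Qed.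

Lemma st_big t r : 2 <= t -> step (pr t r) = pr t r.
Proof.
  intro Ht. destruct t as [|[|t]]; [lia|lia|]. Time st2. reflexivity.
Qed.

Lemma st_big' s : 2 <= fst (upr s) -> step s = s.
Proof. intro H. rewrite <- (pr_surj s). apply st_big. exact H. Qed.

Definition iterc : code := CRec CId (CComp stepc (CComp CSnd CSnd)).
Lemma sem_iter s n : sem iterc (pr s n) = Nat.iter n step s.
Proof.
  unfold iterc. cbn [sem]. rewrite uprp. cbn [fst snd]. induction n; cbn [nat_rec nat_rect].
  - reflexivity.
  - cbn [sem]. rewrite !uprp. cbn [fst snd]. rewrite uprp. cbn [fst snd]. cbn [nat_rec] in IHn. rewrite IHn. reflexivity.
Qed.

Definition initc : code := mkE CFst CSnd (constc 0).
Lemma sem_init d z : sem initc (pr d z) = EvalS d z 0.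
Proof. unfold initc, mkE, EvalS. cbn [sem]. rewrite uprp, sem_const. reflexivity. Qed.

Definition Gc : code := CFst o (iterc o CPair (initc o CFst) CSnd).
Definition Fc : code := subc o CPair (constc 2) Gc.
Lemma sem_F w i : sem Fc (pr w i) = 2 - fst (upr (Nat.iter i step (sem initc w))).
Proof.
  unfold Fc, Gc. cbn [sem]. rewrite sem_const, uprp. cbn [fst snd]. rewrite sem_iter.
  rewrite <- sem_sub. rewrite pr_fun. reflexivity.
Qed.

Definition Interp : code := CComp (CComp CSnd iterc) (CPair initc (CMu Fc)).

Ltac mf := repeat unfold Interp, Fc, Gc, initc, iterc, stepc, EvalB, RetB, mkE, mkR, mkH, cD, cX, cK, cCT, cCR,
  cCRf, cCRg, cV, cL, cL', cFR, cKT, cFT, cFA, consc, ifz, ifeq, subc, predc;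
  cbn [switch mufree constc]; repeat split.

Lemma mf_F : mufree Fc. Proof. mf. Qed.
Lemma mf_init : mufree initc. Proof. mf. Qed.
Lemma mf_iter : mufree iterc. Proof. mf. Qed.

Definition phic c x y := exists k, evalk k c x = Some y.

Lemma phi_sem c x : mufree c -> phic c x (sem c x).
Proof. intro H. destruct (sem_total c H x) as [k E]. exists k. exact E. Qed.

Lemma phi_pair_r f g x b : mufree f -> phic g x b -> phic (CPair f g) x (pair (sem f x) b).
Proof.
  intros Hf [k2 E2]. destruct (sem_total f Hf x) as [k1 E1]. exists (S (max k1 k2)).
  rewrite evalk_pair.
  rewrite (evalk_mono k1 (max k1 k2) _ _ _ ltac:(lia) E1), (evalk_mono k2 (max k1 k2) _ _ _ ltac:(lia) E2).
  reflexivity.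
Qed.

Lemma phi_comp f g x b y : phic g x b -> phic f b y -> phic (CComp f g) x y.
Proof.
  intros [k2 E2] [k1 E1]. exists (S (max k1 k2)). rewrite evalk_comp.
  rewrite (evalk_mono k2 (max k1 k2) _ _ _ ltac:(lia) E2).
  exact (evalk_mono k1 (max k1 k2) _ _ _ ltac:(lia) E1).
Qed.

Lemma srch_ok E x n0 : forall j i, n0 < i + j -> i <= n0 ->
  (forall l, i <= l < n0 -> exists v, E (pair x l) = Some (S v)) ->
  E (pair x n0) = Some 0 -> srchF E x j i = Some n0.
Proof.
  induction j; intros i H1 H2 H3 H4; [lia|]. simpl.
  destruct (Nat.eq_dec i n0) as [->|Hne].
  - rewrite H4. reflexivity.
  - destruct (H3 i ltac:(lia)) as [v Hv]. rewrite Hv. apply IHj; auto; try lia.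
    intros l Hl. apply H3. lia.
Qed.

Lemma fuel_upto F x n : mufree F -> exists k, forall j, j <= n -> evalk k F (pair x j) = Some (sem F (pair x j)).
Proof.
  intro HF. induction n.
  - destruct (sem_total F HF (pair x 0)) as [k E]. exists k. intros j Hj. replace j with 0 by lia. exact E.
  - destruct IHn as [k1 E1]. destruct (sem_total F HF (pair x (S n))) as [k2 E2].
    exists (max k1 k2). intros j Hj. destruct (Nat.eq_dec j (S n)) as [->|Hne].
    + exact (evalk_mono k2 (max k1 k2) _ _ _ ltac:(lia) E2).
    + exact (evalk_mono k1 (max k1 k2) _ _ _ ltac:(lia) (E1 j ltac:(lia))).
Qed.

Lemma phi_mu F x n0 : mufree F -> sem F (pr x n0) = 0 -> (forall j, j < n0 -> sem F (pr x j) <> 0) ->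
  phic (CMu F) x n0.
Proof.
  intros HF H0 Hlt. rewrite pr_fun in H0, Hlt. destruct (fuel_upto F x n0 HF) as [k Ek].
  exists (S (max k (S n0))). rewrite evalk_mu.
  apply srch_ok; try lia.
  - intros l Hl. rewrite (evalk_mono k (max k (S n0)) _ _ _ ltac:(lia) (Ek l ltac:(lia))).
    destruct (sem F (pair x l)) eqn:E. { exfalso. apply (Hlt l); auto. lia. } eauto.
  - rewrite (evalk_mono k (max k (S n0)) _ _ _ ltac:(lia) (Ek n0 ltac:(lia))). rewrite H0. reflexivity.
Qed.

Lemma least_ex (P : nat -> Prop) (Pdec : forall n, {P n} + {~ P n}) N : P N ->
  exists n0, P n0 /\ n0 <= N /\ forall j, j < n0 -> ~ P j.
Proof.
  induction N as [N IH] using (well_founded_induction lt_wf). intro HN.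
  destruct (Nat.eq_dec N 0) as [->|HN0].
  - exists 0. split; auto. split; auto. intros; lia.
  -
    assert (forall m, m <= N -> (exists j, j < m /\ P j) \/ (forall j, j < m -> ~ P j)) as Hs.
    { induction m; intros Hm. right; intros; lia.
      destruct (IHm ltac:(lia)) as [[j [Hj Pj]]|Hno]. left; exists j; split; auto; lia.
      destruct (Pdec m) as [Pm|nPm]. left; exists m; split; auto.
      right. intros j Hj. destruct (Nat.eq_dec j m) as [->|]; auto. apply Hno; lia. }
    destruct (Hs N (le_n _)) as [[j [Hj Pj]]|Hno].
    + destruct (IH j Hj Pj) as [n0 [P0 [Hle Hmin]]]. exists n0. split; auto. split; auto. lia.
    + exists N. split; auto.
Qed.

Lemma interp_ok c z y : (exists k, evalk k c z = Some y) -> phic Interp (pr (encode c) z) y.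
Proof.
  intros [k Hk].
  assert (HS := sim k c z y Hk 0).
  assert (Hst : Star (EvalS (encode c) z 0) (HaltS y)).
  { eapply star_trans. exact HS. apply star_step. rewrite st_halt. apply star_refl. }
  destruct Hst as [N HN].
  set (w := pr (encode c) z).
  assert (Hinit : sem initc w = EvalS (encode c) z 0) by apply sem_init.
  destruct (least_ex (fun n => sem Fc (pr w n) = 0) (fun n => Nat.eq_dec _ _) N) as [n0 [H0 [Hle Hmin]]].
  { rewrite sem_F, Hinit, HN. unfold HaltS. rewrite uprp. reflexivity. }
  assert (Hfix : forall m s, 2 <= fst (upr s) -> Nat.iter m step s = s).
  { induction m; intros s Hs; simpl; auto. rewrite IHm; auto. apply st_big'. exact Hs. }
  assert (Hn0 : Nat.iter n0 step (sem initc w) = HaltS y).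
  { rewrite sem_F in H0. rewrite <- HN, <- Hinit.
    replace N with ((N - n0) + n0) by lia. rewrite Nat.iter_add. rewrite (Hfix (N - n0) (Nat.iter n0 step (sem initc w))); auto. lia. }
  unfold Interp. eapply phi_comp.
  - apply (phi_pair_r initc (CMu Fc) w n0 mf_init). apply phi_mu; [apply mf_F|exact H0|exact Hmin].
  - assert (Hm : mufree (CComp CSnd iterc)) by (split; [exact I|apply mf_iter]).
    assert (E := phi_sem _ (pair (sem initc w) n0) Hm). cbn [sem] in E.
    rewrite <- pr_fun, sem_iter, Hn0 in E. unfold HaltS in E. rewrite uprp in E. rewrite <- pr_fun. exact E.
Qed.

Lemma pair_ge a b : a + b <= pair a b.
Proof. unfold pair. pose proof (Cantor.to_nat_non_decreasing a b). lia. Qed.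

Ltac dec2 IH1 IH2 Hfu :=
  rewrite upp; cbv beta iota; rewrite upp; cbv beta iota;
  match type of Hfu with context [pair ?t (pair ?a ?b)] =>
    pose proof (pair_ge t (pair a b)); pose proof (pair_ge a b) end;
  rewrite IH1, IH2; [reflexivity| lia | lia].

Lemma dec_fuel : forall c fu, encode c < fu -> decode_fuel fu (encode c) = c.
Proof.
  induction c; intros fu Hfu; destruct fu as [|fu]; try lia; cbn [encode decode_fuel] in *.
  1-5: rewrite upp; reflexivity.
  1-3: dec2 IHc1 IHc2 Hfu.
  rewrite upp. cbv beta iota. pose proof (pair_ge 8 (encode c)).
  rewrite IHc; [reflexivity|lia].
Qed.

Lemma dec_enc c : decode (encode c) = c.
Proof. unfold decode. apply dec_fuel. lia. Qed.

Definition rearr : code := CPair (CFst o CFst) (CPair (CSnd o CFst) CSnd).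
Definition Uc : code := CComp Interp rearr.

Lemma U_ok c a x v : phic c (pair a x) v -> phic Uc (pair (pair (encode c) a) x) v.
Proof.
  intro H. unfold Uc. eapply phi_comp.
  - apply phi_sem. repeat split.
  - unfold rearr. cbn [sem]. rewrite <- pr_fun, !uprp. cbn [fst snd]. rewrite !uprp. cbn [fst snd].
    apply interp_ok. rewrite <- pr_fun in H. exact H.
Qed.

From Stdlib Require Import IndefiniteDescription.

Definition Wc : Type := { w : nat | forall x, exists y, phic Uc (pair w x) y }.
Definition WA : PAsm := mkPAsm Wc (fun w => proj1_sig w).

Definition evW (p : carrier (prodA WA NN)) : carrier NN :=
  proj1_sig (constructive_indefinite_description _ (proj2_sig (fst p) (snd p))).

Lemma evW_spec (w : Wc) x : phic Uc (pair (proj1_sig w) x) (evW (w, x)).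
Proof. unfold evW. cbn [fst snd]. exact (proj2_sig (constructive_indefinite_description _ _)). Qed.

Lemma phic_phi c x y : phic c x y -> phi (encode c) x y.
Proof. unfold phi. rewrite dec_enc. auto. Qed.

Lemma phi_phic e x y : phi e x y -> phic (decode e) x y.
Proof. auto. Qed.

Lemma phic_det c x a b : phic c x a -> phic c x b -> a = b.
Proof. intros [k1 H1] [k2 H2]. eapply evalk_det; eauto. Qed.

Theorem proposition4p5 : TCT_PGamma.
Proof.
  exists WA, evW. split; [split|].
  - exists (encode Uc). intros [w x]. apply phic_phi. apply (evW_spec w x).
  - intros X h [t Ht].
    set (c := decode t).
    assert (Hc : forall a x, phic c (pair (real X a) x) (h (a, x))).
    { intros a x. exact (Ht (a, x)). }
    unshelve eexists (fun a => exist _ (pair (encode c) (real X a)) _).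
    + intro x. exists (h (a, x)). apply U_ok. apply Hc.
    + split.
      * exists (encode (CPair (constc (encode c)) CId)). intro a. apply phic_phi.
        cbn [real WA proj1_sig].
        assert (E := phi_sem (CPair (constc (encode c)) CId) (real X a) (conj (mf_const _) I)).
        cbn [sem] in E. rewrite sem_const, pr_fun in E. exact E.
      * intros a x. eapply phic_det. apply (evW_spec _ x). cbn [proj1_sig].
        apply U_ok. apply Hc.
  - intro f. destruct f as [w Hw] eqn:Ef.
    exists (encode (CComp Uc (CPair (constc w) CId))).
    intro x.
    assert (H1 := evW_spec f x). rewrite Ef in H1. cbn [proj1_sig] in H1.
    assert (H2 : phic (CComp Uc (CPair (constc w) CId)) x (evW (exist _ w Hw, x))).
    { eapply phi_comp; [|exact H1].
      assert (E := phi_sem (CPair (constc w) CId) x (conj (mf_const _) I)).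
      cbn [sem] in E. rewrite sem_const, pr_fun in E. exact E. }
    destruct H2 as [k Hk].
    exists (pair k (evW (exist _ w Hw, x))). split.
    + unfold kleeneT. rewrite upp. rewrite dec_enc, Hk. rewrite Nat.eqb_refl. reflexivity.
    + unfold kleeneU. rewrite upp. reflexivity.
Qed.
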